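(* Let $\tilde X^1,\tilde X^2,\tilde X^3$ be the restrictions to the unit sphere $S^2\subset\mathbb{R}^3$ of the Cartesian coordinate functions, and on $S^2\setminus\{(0,0,1)\}$ define the complex-valued functions $Z=\dfrac{\tilde X^1+i\tilde X^2}{1-\tilde X^3}$, $\bar Z=\dfrac{\tilde X^1-i\tilde X^2}{1-\tilde X^3}$, and the complex vector field $\mathring Y^A=(\epsilon^{CD}\nabla_CZ\nabla_D\bar Z)^{-1}\epsilon^{AB}\nabla_B\bar Z$. For an integer $m$, let $Y^A=Z^{m+1}\mathring Y^A$. Then \[(\Delta+2)\nabla_AY^A=0\quad\text{on }S^2\setminus\{(0,0,1)\}.\]
   Context: $S^2$ carries the round metric $\sigma_{AB}$ induced from $\mathbb{R}^3$, with area form $\epsilon_{AB}$, Levi-Civita connection $\nabla$ and Laplacian $\Delta$ (extended complex-linearly to complex-valued functions and fields); indices raised/lowered with $\sigma$. *)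

(* Defs.v *)
From Stdlib Require Import Reals ZArith.
From Coquelicot Require Import Coquelicot.
Open Scope R_scope.

Definition pt := (R * R * R)%type.
Definition px (p : pt) : R := fst (fst p).
Definition py (p : pt) : R := snd (fst p).
Definition pz (p : pt) : R := snd p.

Definition on_sphere (p : pt) : Prop := px p ^ 2 + py p ^ 2 + pz p ^ 2 = 1.
Definition north_pole : pt := (0, 0, 1).
Definition south_pole : pt := (0, 0, -1).

Definition pnorm (p : pt) : R := sqrt (px p ^ 2 + py p ^ 2 + pz p ^ 2).
Definition normalize (p : pt) : pt :=
  (px p / pnorm p, py p / pnorm p, pz p / pnorm p).

Definition pdx (f : pt -> R) (p : pt) : R := Derive (fun t => f (t, py p, pz p)) (px p).
Definition pdy (f : pt -> R) (p : pt) : R := Derive (fun t => f (px p, t, pz p)) (py p).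
Definition pdz (f : pt -> R) (p : pt) : R := Derive (fun t => f (px p, py p, t)) (pz p).

Definition cpdx (F : pt -> C) (p : pt) : C :=
  (pdx (fun q => Re (F q)) p, pdx (fun q => Im (F q)) p).
Definition cpdy (F : pt -> C) (p : pt) : C :=
  (pdy (fun q => Re (F q)) p, pdy (fun q => Im (F q)) p).
Definition cpdz (F : pt -> C) (p : pt) : C :=
  (pdz (fun q => Re (F q)) p, pdz (fun q => Im (F q)) p).

(* complex vectors in C^3 (complexified tangent vectors of S^2 viewed in R^3) *)
Definition cvec := (C * C * C)%type.
Definition cv1 (v : cvec) : C := fst (fst v).
Definition cv2 (v : cvec) : C := snd (fst v).
Definition cv3 (v : cvec) : C := snd v.
Definition cdot (u v : cvec) : C :=
  Cplus (Cplus (Cmult (cv1 u) (cv1 v)) (Cmult (cv2 u) (cv2 v))) (Cmult (cv3 u) (cv3 v)).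
Definition ccross (u v : cvec) : cvec :=
  (Cminus (Cmult (cv2 u) (cv3 v)) (Cmult (cv3 u) (cv2 v)),
   Cminus (Cmult (cv3 u) (cv1 v)) (Cmult (cv1 u) (cv3 v)),
   Cminus (Cmult (cv1 u) (cv2 v)) (Cmult (cv2 u) (cv1 v))).
Definition cscale (a : C) (v : cvec) : cvec :=
  (Cmult a (cv1 v), Cmult a (cv2 v), Cmult a (cv3 v)).

(* Intrinsic calculus on the round S^2, realised through the embedding:
   a function f on S^2 (only its values on S^2 matter) is extended to be
   0-homogeneous, f o normalize; at points of S^2:
   - sgrad f  = nabla_A f  (tangential gradient, = R^3 gradient of f o normalize);
   - sdiv V   = nabla_A V^A for a tangent field V (= R^3 divergence of V o normalize);
   - slap f   = Delta f = nabla^A nabla_A f. *)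
Definition sgrad (f : pt -> C) (p : pt) : cvec :=
  (cpdx (fun q => f (normalize q)) p,
   cpdy (fun q => f (normalize q)) p,
   cpdz (fun q => f (normalize q)) p).
Definition sdiv (V : pt -> cvec) (p : pt) : C :=
  Cplus (Cplus (cpdx (fun q => cv1 (V (normalize q))) p)
               (cpdy (fun q => cv2 (V (normalize q))) p))
        (cpdz (fun q => cv3 (V (normalize q))) p).
Definition slap (f : pt -> C) (p : pt) : C := sdiv (sgrad f) p.

Definition normal (p : pt) : cvec := (RtoC (px p), RtoC (py p), RtoC (pz p)).

(* area form: eps_{AB} u^A v^B = n . (u x v); hence
   eps^{AB} nabla_B g = nabla g x n   and
   eps^{CD} nabla_C f nabla_D g = n . (nabla f x nabla g). *)
Definition eps_grad (g : pt -> C) (p : pt) : cvec := ccross (sgrad g p) (normal p).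
Definition eps_pair (f g : pt -> C) (p : pt) : C :=
  cdot (normal p) (ccross (sgrad f p) (sgrad g p)).

Definition Xt1 (p : pt) : C := RtoC (px p).
Definition Xt2 (p : pt) : C := RtoC (py p).
Definition Xt3 (p : pt) : C := RtoC (pz p).
Definition Zst (p : pt) : C :=
  Cdiv (Cplus (Xt1 p) (Cmult Ci (Xt2 p))) (Cminus (RtoC 1) (Xt3 p)).
Definition Zbar (p : pt) : C :=
  Cdiv (Cminus (Xt1 p) (Cmult Ci (Xt2 p))) (Cminus (RtoC 1) (Xt3 p)).

Definition Ycirc (p : pt) : cvec := cscale (Cinv (eps_pair Zst Zbar p)) (eps_grad Zbar p).

Definition Czpow (z : C) (k : Z) : C :=
  match k with
  | Z0 => RtoC 1
  | Zpos n => Cpow z (Pos.to_nat n)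
  | Zneg n => Cinv (Cpow z (Pos.to_nat n))
  end.

Definition Yfield (m : Z) (p : pt) : cvec := cscale (Czpow (Zst p) (m + 1)) (Ycirc p).

(* Main.v *)
Require Import Defs.
From Stdlib Require Import Reals ZArith.
From Coquelicot Require Import Coquelicot.
Open Scope R_scope.
From Stdlib Require Import Lia Lra Psatz.

Lemma rd_eqv (f : R -> R) (x l l' : R) : is_derive f x l -> l = l' -> is_derive f x l'.
Proof. intros H ->; exact H. Qed.
Lemma rd_plus (f g : R -> R) x df dg : is_derive f x df -> is_derive g x dg ->
  is_derive (fun t => f t + g t) x (df + dg).
Proof. intros; apply (is_derive_plus f g); auto. Qed.
Lemma rd_minus (f g : R -> R) x df dg : is_derive f x df -> is_derive g x dg ->
  is_derive (fun t => f t - g t) x (df - dg).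
Proof. intros; apply (is_derive_minus f g); auto. Qed.
Lemma rd_opp (f : R -> R) x df : is_derive f x df ->
  is_derive (fun t => - f t) x (- df).
Proof. intros; apply (is_derive_opp f); auto. Qed.
Lemma rd_mult (f g : R -> R) x df dg : is_derive f x df -> is_derive g x dg ->
  is_derive (fun t => f t * g t) x (df * g x + f x * dg).
Proof. intros; apply (is_derive_mult f g); auto. intros; apply Rmult_comm. Qed.
Lemma rd_const (c : R) x : is_derive (fun _ => c) x 0.
Proof. apply (is_derive_const c). Qed.

Definition CD (F : R -> C) (t : R) (l : C) :=
  is_derive (fun x => fst (F x)) t (fst l) /\ is_derive (fun x => snd (F x)) t (snd l).

Lemma CD_eqv F t l l' : CD F t l -> l = l' -> CD F t l'.
Proof. intros H ->; exact H. Qed.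
Lemma CD_ext_loc F G t l : locally t (fun x => F x = G x) -> CD F t l -> CD G t l.
Proof.
  intros Hl [H1 H2]; split.
  - apply (is_derive_ext_loc (fun x => fst (F x))); auto.
    eapply filter_imp; [|exact Hl]; intros x ->; reflexivity.
  - apply (is_derive_ext_loc (fun x => snd (F x))); auto.
    eapply filter_imp; [|exact Hl]; intros x ->; reflexivity.
Qed.
Lemma CD_const (c : C) t : CD (fun _ => c) t (RtoC 0).
Proof. split; apply rd_const. Qed.
Lemma CD_R (f : R -> R) t l : is_derive f t l -> CD (fun x => RtoC (f x)) t (RtoC l).
Proof. intros H; split; simpl; [exact H| apply rd_const]. Qed.
Lemma CD_plus F G t lf lg : CD F t lf -> CD G t lg -> CD (fun x => Cplus (F x) (G x)) t (Cplus lf lg).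
Proof. intros [H1 H2] [H3 H4]; split; apply rd_plus; auto. Qed.
Lemma CD_minus F G t lf lg : CD F t lf -> CD G t lg -> CD (fun x => Cminus (F x) (G x)) t (Cminus lf lg).
Proof. intros [H1 H2] [H3 H4]; split; simpl; apply rd_plus; auto; apply rd_opp; auto. Qed.
Lemma CD_opp F t lf : CD F t lf -> CD (fun x => Copp (F x)) t (Copp lf).
Proof. intros [H1 H2]; split; apply rd_opp; auto. Qed.
Lemma CD_mult F G t lf lg : CD F t lf -> CD G t lg ->
  CD (fun x => Cmult (F x) (G x)) t (Cplus (Cmult lf (G t)) (Cmult (F t) lg)).
Proof.
  intros [H1 H2] [H3 H4]; split; simpl.
  - eapply rd_eqv; [apply rd_minus; apply rd_mult; eauto|]. cbv beta. ring.
  - eapply rd_eqv; [apply rd_plus; apply rd_mult; eauto|]. cbv beta; ring.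
Qed.
Lemma CD_inv F t lf : CD F t lf -> F t <> RtoC 0 ->
  CD (fun x => Cinv (F x)) t (Copp (Cmult lf (Cmult (Cinv (F t)) (Cinv (F t))))).
Proof.
  intros [H1 H2] Hn.
  assert (Hd : fst (F t) ^ 2 + snd (F t) ^ 2 <> 0).
  { intro E; apply Hn. destruct (F t) as [a b]; simpl in *.
    assert (E' : a * a + b * b = 0) by (rewrite <- E; ring).
    destruct (Rplus_sqr_eq_0 a b E') as [-> ->]; reflexivity. }
  assert (Hs : is_derive (fun x => fst (F x) ^ 2 + snd (F x) ^ 2) t
             (2 * fst (F t) * fst lf + 2 * snd (F t) * snd lf)).
  { eapply rd_eqv.
    - apply rd_plus.
      + apply (is_derive_pow (fun x => fst (F x)) 2 t (fst lf) H1).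
      + apply (is_derive_pow (fun x => snd (F x)) 2 t (snd lf) H2).
    - simpl; ring. }
  split; simpl.
  - eapply rd_eqv; [apply (is_derive_div (fun x => fst (F x)) (fun x => fst (F x) ^ 2 + snd (F x) ^ 2)); [exact H1|exact Hs|exact Hd]|].
    destruct (F t) as [a b]; destruct lf as [c d]; simpl in *. field. lra.
  - eapply rd_eqv; [apply (is_derive_div (fun x => - snd (F x)) (fun x => fst (F x) ^ 2 + snd (F x) ^ 2)); [apply rd_opp; exact H2|exact Hs|exact Hd]|].
    destruct (F t) as [a b]; destruct lf as [c d]; simpl in *. field. lra.
Qed.

Ltac csimpl := cbn [fst snd Cplus Cmult Cminus Copp Cinv RtoC Ci Cdiv Re Im] in *.
Ltac csplit := apply injective_projections; csimpl.

Lemma Cpow_nz z n : z <> RtoC 0 -> Cpow z n <> RtoC 0.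
Proof. intros H; induction n. exact C1_nz.
change (Cpow z (S n)) with (Cmult z (Cpow z n)). apply Cmult_neq_0; auto. Qed.

Lemma CD_Cpow F t lf n : CD F t lf ->
  CD (fun x => Cpow (F x) n) t (Cmult (Cmult (RtoC (INR n)) (Cpow (F t) (pred n))) lf).
Proof.
  intros H; induction n.
  - change (fun x => Cpow (F x) 0) with (fun _ : R => RtoC 1).
    eapply CD_eqv. apply CD_const.
    change (INR 0) with 0. csplit; ring.
  - change (fun x => Cpow (F x) (S n)) with (fun x => Cmult (F x) (Cpow (F x) n)).
    eapply CD_eqv; [apply (CD_mult F (fun x => Cpow (F x) n)); [exact H|exact IHn]|].
    destruct n as [|n].
    + change (INR 0) with 0. change (INR 1) with 1.
      cbn [pred]. change (Cpow (F t) 0) with (RtoC 1). csplit; ring.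
    + change (pred (S (S n))) with (S n). change (pred (S n)) with n.
      change (Cpow (F t) (S n)) with (Cmult (F t) (Cpow (F t) n)).
      rewrite !S_INR.
      destruct (F t) as [a b]; destruct (Cpow (F t) n) as [p q]; destruct lf as [c d].
      csplit; ring.
Qed.

Lemma Czpow_nat z n : Czpow z (Z.of_nat n) = Cpow z n.
Proof. destruct n; [reflexivity|]. unfold Z.of_nat, Czpow. rewrite SuccNat2Pos.id_succ. reflexivity. Qed.

Lemma CD_Czpow F t lf k : CD F t lf -> (F t <> RtoC 0 \/ (0 <= k)%Z) ->
  CD (fun x => Czpow (F x) k) t (Cmult (Cmult (RtoC (IZR k)) (Czpow (F t) (k - 1))) lf).
Proof.
  intros H Hc. destruct k as [|n|n].
  - change (fun x => Czpow (F x) 0) with (fun _ : R => RtoC 1).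
    eapply CD_eqv; [apply CD_const|]. csplit; ring.
  - change (fun x => Czpow (F x) (Z.pos n)) with (fun x => Cpow (F x) (Pos.to_nat n)).
    eapply CD_eqv; [apply (CD_Cpow F t lf (Pos.to_nat n) H)|].
    replace (Z.pos n - 1)%Z with (Z.of_nat (pred (Pos.to_nat n))) by lia.
    rewrite Czpow_nat. rewrite <- positive_nat_Z, <- INR_IZR_INZ. reflexivity.
  - destruct Hc as [Hc|Hc]; [|lia].
    destruct (Pos2Nat.is_succ n) as [N HN].
    assert (Hn : Z.neg n = (- Z.of_nat (S N))%Z) by lia.
    replace (Z.neg n - 1)%Z with (Z.neg (Pos.of_succ_nat (S N))) by lia.
    change (fun x => Czpow (F x) (Z.neg n)) with (fun x => Cinv (Cpow (F x) (Pos.to_nat n))).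
    rewrite HN.
    eapply CD_eqv; [apply (CD_inv (fun x => Cpow (F x) (S N))); [apply CD_Cpow; exact H| apply Cpow_nz; auto]|].
    rewrite Hn.
    change (Czpow (F t) (Z.neg (Pos.of_succ_nat (S N)))) with (Cinv (Cpow (F t) (Pos.to_nat (Pos.of_succ_nat (S N))))).
    rewrite SuccNat2Pos.id_succ.
    change (pred (S N)) with N.
    change (Cpow (F t) (S (S N))) with (Cmult (F t) (Cmult (F t) (Cpow (F t) N))).
    change (Cpow (F t) (S N)) with (Cmult (F t) (Cpow (F t) N)).
    assert (HP := Cpow_nz (F t) N Hc).
    replace (RtoC (IZR (- Z.of_nat (S N)))) with (Copp (RtoC (INR (S N)))).
    2:{ rewrite opp_IZR, <- INR_IZR_INZ. csplit; ring. }
    field. split; auto.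
Qed.

Definition dirv (j : nat) (s : pt) (t : R) : pt :=
  match j with 0%nat => (t, py s, pz s) | 1%nat => (px s, t, pz s) | _ => (px s, py s, t) end.
Definition crd (i : nat) (s : pt) : R := match i with 0%nat => px s | 1%nat => py s | _ => pz s end.
Definition nrm (j : nat) : nat := match j with 0%nat => 0%nat | 1%nat => 1%nat | _ => 2%nat end.
Definition kr (i j : nat) : R := if Nat.eqb (nrm i) (nrm j) then 1 else 0.

Lemma leaf_R i j s : on_sphere s ->
  is_derive (fun t => crd i (normalize (dirv j s t))) (crd j s) (kr i j - crd i s * crd j s).
Proof.
  destruct s as [[a b] c]. unfold on_sphere; cbn [px py pz fst snd]. intros Hs.
  destruct i as [|[|i]]; destruct j as [|[|j]];
  unfold crd, dirv, kr, normalize, pnorm, nrm; cbn [px py pz fst snd Nat.eqb];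
  (auto_derive; [ replace (a * (a * 1) + b * (b * 1) + c * (c * 1)) with 1 by (symmetry; transitivity (a ^ 2 + b ^ 2 + c ^ 2); [ring|exact Hs]); rewrite ?sqrt_1; split; [lra|split; [lra|trivial]] | replace (a * (a * 1) + b * (b * 1) + c * (c * 1)) with 1 by (symmetry; transitivity (a ^ 2 + b ^ 2 + c ^ 2); [ring|exact Hs]); rewrite ?sqrt_1; field ]).
Qed.

Lemma CD_crd i j s : on_sphere s ->
  CD (fun t => RtoC (crd i (normalize (dirv j s t)))) (crd j s) (RtoC (kr i j - crd i s * crd j s)).
Proof. intros H; apply CD_R, leaf_R, H. Qed.
Lemma CD_Xt1 j s : on_sphere s ->
  CD (fun t => Xt1 (normalize (dirv j s t))) (crd j s) (RtoC (kr 0 j - px s * crd j s)).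
Proof. intros H; exact (CD_crd 0 j s H). Qed.
Lemma CD_Xt2 j s : on_sphere s ->
  CD (fun t => Xt2 (normalize (dirv j s t))) (crd j s) (RtoC (kr 1 j - py s * crd j s)).
Proof. intros H; exact (CD_crd 1 j s H). Qed.
Lemma CD_Xt3 j s : on_sphere s ->
  CD (fun t => Xt3 (normalize (dirv j s t))) (crd j s) (RtoC (kr 2 j - pz s * crd j s)).
Proof. intros H; exact (CD_crd 2 j s H). Qed.
Lemma CD_px j s : on_sphere s ->
  CD (fun t => RtoC (px (normalize (dirv j s t)))) (crd j s) (RtoC (kr 0 j - px s * crd j s)).
Proof. intros H; exact (CD_crd 0 j s H). Qed.
Lemma CD_py j s : on_sphere s ->
  CD (fun t => RtoC (py (normalize (dirv j s t)))) (crd j s) (RtoC (kr 1 j - py s * crd j s)).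
Proof. intros H; exact (CD_crd 1 j s H). Qed.
Lemma CD_pz j s : on_sphere s ->
  CD (fun t => RtoC (pz (normalize (dirv j s t)))) (crd j s) (RtoC (kr 2 j - pz s * crd j s)).
Proof. intros H; exact (CD_crd 2 j s H). Qed.

Lemma CD_sczpow (c : R) F t lf k : CD F t lf -> (F t <> RtoC 0 \/ (0 <= k)%Z \/ c = 0) ->
  CD (fun x => Cmult (RtoC c) (Czpow (F x) k)) t
     (Cmult (RtoC c) (Cmult (Cmult (RtoC (IZR k)) (Czpow (F t) (k - 1))) lf)).
Proof.
  intros H Hc.
  destruct (Req_dec c 0) as [E|E].
  - subst c. apply (CD_ext_loc (fun _ => RtoC 0)).
    + apply filter_forall. intros x. csplit; ring.
    + eapply CD_eqv; [apply CD_const|]. csplit; ring.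
  - eapply CD_eqv; [apply CD_mult; [apply CD_const| apply CD_Czpow; [exact H|]]|].
    + destruct Hc as [Hc|[Hc|Hc]]; [left; exact Hc|right; exact Hc|contradiction].
    + destruct (Czpow (F t) (k-1)) as [p q]; destruct (F t) as [u v]; destruct lf as [x y]. csplit; ring.
Qed.

Lemma sphere_norm s : on_sphere s -> normalize s = s.
Proof.
  destruct s as [[a b] c]; unfold on_sphere, normalize, pnorm; cbn [px py pz fst snd].
  intros H; rewrite H, sqrt_1. f_equal; [f_equal|]; field.
Qed.
Lemma dirv_crd j s : dirv j s (crd j s) = s.
Proof. destruct s as [[a b] c]; destruct j as [|[|j]]; reflexivity. Qed.
Lemma Nd j s : on_sphere s -> normalize (dirv j s (crd j s)) = s.
Proof. intros H; rewrite dirv_crd; apply sphere_norm, H. Qed.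

Ltac cd_leaf := fail.
Ltac cd_step :=
  lazymatch goal with
  | |- CD (fun _ => ?c) _ _ => apply CD_const
  | |- CD (fun x => Cplus (@?f x) (@?g x)) _ _ => apply CD_plus
  | |- CD (fun x => Cminus (@?f x) (@?g x)) _ _ => apply CD_minus
  | |- CD (fun x => Copp (@?f x)) _ _ => apply CD_opp
  | |- CD (fun x => Cmult (RtoC ?c) (Czpow (@?f x) ?k)) _ _ => eapply CD_sczpow
  | |- CD (fun x => Cmult (@?f x) (@?g x)) _ _ => apply CD_mult
  | |- CD (fun x => Cinv (@?f x)) _ _ => eapply CD_inv
  | |- CD (fun x => Czpow (@?f x) ?k) _ _ => eapply CD_Czpow
  | |- CD (fun x => Xt1 (normalize (dirv ?j ?s x))) _ _ => eapply CD_Xt1; [assumption]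
  | |- CD (fun x => Xt2 (normalize (dirv ?j ?s x))) _ _ => eapply CD_Xt2; [assumption]
  | |- CD (fun x => Xt3 (normalize (dirv ?j ?s x))) _ _ => eapply CD_Xt3; [assumption]
  | |- CD (fun x => RtoC (px (normalize (dirv ?j ?s x)))) _ _ => eapply CD_px; [assumption]
  | |- CD (fun x => RtoC (py (normalize (dirv ?j ?s x)))) _ _ => eapply CD_py; [assumption]
  | |- CD (fun x => RtoC (pz (normalize (dirv ?j ?s x)))) _ _ => eapply CD_pz; [assumption]
  | |- CD (fun x => RtoC (crd ?i (normalize (dirv ?j ?s x)))) _ _ => eapply CD_crd; [assumption]
  | |- CD _ _ _ => cd_leaf
  end.
Ltac cd_all := repeat (match goal with |- CD _ _ _ => cd_step end).

Definition Gf (j : nat) (s : pt) : C :=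
  Cmult (Cminus (Cplus (Cplus (RtoC (kr 0 j)) (Cmult Ci (RtoC (kr 1 j)))) (Cmult (Zst s) (RtoC (kr 2 j))))
                (Cmult (RtoC (crd j s)) (Zst s)))
        (Cinv (Cminus (RtoC 1) (RtoC (pz s)))).
Definition Gbf (j : nat) (s : pt) : C :=
  Cmult (Cminus (Cplus (Cminus (RtoC (kr 0 j)) (Cmult Ci (RtoC (kr 1 j)))) (Cmult (Zbar s) (RtoC (kr 2 j))))
                (Cmult (RtoC (crd j s)) (Zbar s)))
        (Cinv (Cminus (RtoC 1) (RtoC (pz s)))).

Lemma CD_Zst j s : on_sphere s -> pz s < 1 ->
  CD (fun t => Zst (normalize (dirv j s t))) (crd j s) (Gf j s).
Proof.
  intros Hs Hz. unfold Zst, Cdiv.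
  eapply CD_eqv; [cd_all|].
  - rewrite (Nd _ _ Hs). unfold Xt3. intro E. apply (f_equal fst) in E. csimpl. lra.
  - cbv beta. rewrite !(Nd _ _ Hs). unfold Gf, Zst, Xt1, Xt2, Xt3, Cdiv.
    destruct s as [[a b] c]; cbn [px py pz fst snd] in *.
    csplit; field; lra.
Qed.
Lemma CD_Zbar j s : on_sphere s -> pz s < 1 ->
  CD (fun t => Zbar (normalize (dirv j s t))) (crd j s) (Gbf j s).
Proof.
  intros Hs Hz. unfold Zbar, Cdiv.
  eapply CD_eqv; [cd_all|].
  - rewrite (Nd _ _ Hs). unfold Xt3. intro E. apply (f_equal fst) in E. csimpl. lra.
  - cbv beta. rewrite !(Nd _ _ Hs). unfold Gbf, Zbar, Xt1, Xt2, Xt3, Cdiv.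
    destruct s as [[a b] c]; cbn [px py pz fst snd] in *.
    csplit; field; lra.
Qed.

Definition cpd (j : nat) (F : pt -> C) (s : pt) : C :=
  match j with 0%nat => cpdx F s | 1%nat => cpdy F s | _ => cpdz F s end.
Lemma cpd_CD j F s l : CD (fun t => F (dirv j s t)) (crd j s) l -> cpd j F s = l.
Proof.
  intros [H1 H2]. destruct l as [l1 l2].
  destruct j as [|[|j]]; unfold cpd, cpdx, cpdy, cpdz, pdx, pdy, pdz; cbn [fst snd] in *;
  f_equal; apply is_derive_unique; assumption.
Qed.
Lemma sgrad_cpd f s : sgrad f s = (cpd 0 (fun q => f (normalize q)) s, cpd 1 (fun q => f (normalize q)) s, cpd 2 (fun q => f (normalize q)) s).
Proof. reflexivity. Qed.
Lemma sdiv_cpd V s : sdiv V s = Cplus (Cplus (cpd 0 (fun q => cv1 (V (normalize q))) s) (cpd 1 (fun q => cv2 (V (normalize q))) s)) (cpd 2 (fun q => cv3 (V (normalize q))) s).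
Proof. reflexivity. Qed.

Lemma sphere_param a b c : a ^ 2 + b ^ 2 + c ^ 2 = 1 -> c < 1 ->
  exists X Y, a = 2 * X / (1 + X ^ 2 + Y ^ 2) /\ b = 2 * Y / (1 + X ^ 2 + Y ^ 2) /\
              c = (X ^ 2 + Y ^ 2 - 1) / (1 + X ^ 2 + Y ^ 2).
Proof.
  intros H Hc. exists (a / (1 - c)), (b / (1 - c)).
  assert (E1 : (a / (1 - c)) ^ 2 + (b / (1 - c)) ^ 2 = (a ^ 2 + b ^ 2) / (1 - c) ^ 2) by (field; lra).
  assert (E2 : a ^ 2 + b ^ 2 = 1 - c ^ 2) by lra.
  rewrite E2 in E1.
  assert (E3 : (1 - c ^ 2) / (1 - c) ^ 2 = (1 + c) / (1 - c)) by (field; lra).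
  rewrite E3 in E1.
  replace (1 + (a / (1 - c)) ^ 2 + (b / (1 - c)) ^ 2) with (1 + (1 + c) / (1 - c)) by (rewrite <- E1; ring).
  replace ((a / (1 - c)) ^ 2 + (b / (1 - c)) ^ 2 - 1) with ((1 + c) / (1 - c) - 1) by (rewrite <- E1; ring).
  split; [|split]; field; lra.
Qed.

Lemma pos_D X Y : 0 < 1 + X ^ 2 + Y ^ 2.
Proof. nra. Qed.

Definition wbf (s : pt) : C := Cminus (RtoC (px s)) (Cmult Ci (RtoC (py s))).
Definition omf (s : pt) : C := Cminus (RtoC 1) (RtoC (pz s)).
Definition Pf (s : pt) : cvec :=
  (Cmult (RtoC (/4)) (Cminus (Cmult (omf s) (omf s)) (Cmult (wbf s) (wbf s))),
   Cmult (Copp Ci) (Cmult (RtoC (/4)) (Cplus (Cmult (omf s) (omf s)) (Cmult (wbf s) (wbf s)))),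
   Cmult (RtoC (/2)) (Cmult (wbf s) (omf s))).

Lemma cpd_Zst j s : on_sphere s -> pz s < 1 -> cpd j (fun q => Zst (normalize q)) s = Gf j s.
Proof. intros; apply cpd_CD, CD_Zst; auto. Qed.
Lemma cpd_Zbar j s : on_sphere s -> pz s < 1 -> cpd j (fun q => Zbar (normalize q)) s = Gbf j s.
Proof. intros; apply cpd_CD, CD_Zbar; auto. Qed.

Ltac dcond := repeat split; lra.
Ltac sph_subst :=
  match goal with
  | Hs : ?a ^ 2 + ?b ^ 2 + ?c ^ 2 = 1, Hz : ?c < 1 |- _ =>
      let X := fresh "X" in let Y := fresh "Y" in
      destruct (sphere_param a b c Hs Hz) as [X [Y [-> [-> ->]]]]; clear Hs Hz; pose proof (pos_D X Y)
  end.

Lemma eps_val s : on_sphere s -> pz s < 1 ->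
  eps_pair Zst Zbar s = (0, 2 / ((1 - pz s) * (1 - pz s))).
Proof.
  intros Hs Hz. unfold eps_pair. rewrite !sgrad_cpd, !cpd_Zst, !cpd_Zbar by auto.
  unfold cdot, ccross, normal, cv1, cv2, cv3, Gf, Gbf, Zst, Zbar, Xt1, Xt2, Xt3, Cdiv, kr, crd.
  cbn [nrm Nat.eqb fst snd].
  destruct s as [[a b] c]; unfold on_sphere in *; cbn [px py pz fst snd] in *.
  sph_subst.
  csplit; field; dcond.
Qed.

Lemma Ycirc_val s : on_sphere s -> pz s < 1 -> Ycirc s = Pf s.
Proof.
  intros Hs Hz. unfold Ycirc. rewrite eps_val by auto. unfold eps_grad.
  rewrite !sgrad_cpd, !cpd_Zbar by auto.
  unfold cscale, ccross, normal, cv1, cv2, cv3, Pf, wbf, omf, Gbf, Zbar, Xt1, Xt2, Xt3, Cdiv, kr, crd.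
  cbn [nrm Nat.eqb fst snd].
  destruct s as [[a b] c]; unfold on_sphere in *; cbn [px py pz fst snd] in *.
  sph_subst.
  f_equal; [f_equal|]; csplit; field; dcond.
Qed.

Definition goodk (k : Z) (s : pt) : Prop := on_sphere s /\ pz s < 1 /\ ((k < 0)%Z -> -1 < pz s).

Lemma loc_lt (f : R -> R) t0 M : ex_derive f t0 -> f t0 < M -> locally t0 (fun t => f t < M).
Proof. intros Hd Hl. exact (ex_derive_continuous f t0 Hd (fun y => y < M) (open_lt M (f t0) Hl)). Qed.
Lemma loc_gt (f : R -> R) t0 M : ex_derive f t0 -> M < f t0 -> locally t0 (fun t => M < f t).
Proof. intros Hd Hl. exact (ex_derive_continuous f t0 Hd (fun y => M < y) (open_gt M (f t0) Hl)). Qed.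

Lemma normalize_sphere q : 0 < px q ^ 2 + py q ^ 2 + pz q ^ 2 -> on_sphere (normalize q).
Proof.
  destruct q as [[x y] z]; unfold on_sphere, normalize, pnorm; cbn [px py pz fst snd].
  intros H. assert (Hs := sqrt_lt_R0 _ H).
  assert (E : sqrt (x ^ 2 + y ^ 2 + z ^ 2) ^ 2 = x ^ 2 + y ^ 2 + z ^ 2) by (apply pow2_sqrt; lra).
  field_simplify; [|lra]. rewrite E. field. lra.
Qed.

Lemma good_loc k j s : goodk k s -> locally (crd j s) (fun t => goodk k (normalize (dirv j s t))).
Proof.
  intros [Hs [Hz Hk]].
  assert (L1 : locally (crd j s) (fun t => 0 < px (dirv j s t) ^ 2 + py (dirv j s t) ^ 2 + pz (dirv j s t) ^ 2)).
  { apply loc_gt.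
    - destruct j as [|[|j]]; unfold dirv; cbn [px py pz fst snd]; auto_derive; trivial.
    - rewrite dirv_crd. unfold on_sphere in Hs. lra. }
  assert (L2 : locally (crd j s) (fun t => crd 2 (normalize (dirv j s t)) < 1)).
  { apply loc_lt. eexists; apply leaf_R; auto. rewrite Nd by auto. exact Hz. }
  assert (L3 : locally (crd j s) (fun t => (k < 0)%Z -> -1 < crd 2 (normalize (dirv j s t)))).
  { destruct (Z_lt_le_dec k 0) as [H|H].
    - eapply filter_imp; [|apply (loc_gt (fun t => crd 2 (normalize (dirv j s t))) (crd j s) (-1))].
      + intros x Hx _; exact Hx.
      + eexists; apply leaf_R; auto.
      + rewrite Nd by auto. auto.
    - apply filter_forall. intros x Hx. lia. }
  eapply filter_imp; [|apply filter_and; [exact L1|apply filter_and; [exact L2|exact L3]]].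
  intros x [H1 [H2 H3]]. split; [apply normalize_sphere; exact H1|split; [exact H2|exact H3]].
Qed.

Lemma goodk_Zst k s : goodk k s -> Zst s <> RtoC 0 \/ (0 <= k)%Z.
Proof.
  intros [Hs [Hz Hk]]. destruct (Z_lt_le_dec k 0) as [H|H]; [left|right; exact H].
  specialize (Hk H). destruct s as [[a b] c]; unfold on_sphere in Hs; cbn [px py pz fst snd] in *.
  unfold Zst, Xt1, Xt2, Xt3, Cdiv. intro E.
  assert (Hne : Cminus (RtoC 1) (RtoC c) <> RtoC 0).
  { intro E2; apply (f_equal fst) in E2; cbn [fst Cminus Cplus Copp RtoC] in E2; lra. }
  apply (f_equal (fun z => Cmult z (Cminus (RtoC 1) (RtoC c)))) in E.
  rewrite <- Cmult_assoc, Cinv_l, Cmult_1_r in E by exact Hne.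
  assert (Ea : a = 0).
  { apply (f_equal fst) in E; cbn [fst snd Cmult Cplus Cminus Copp RtoC Ci px py pz] in E. lra. }
  assert (Eb : b = 0).
  { apply (f_equal snd) in E; cbn [fst snd Cmult Cplus Cminus Copp RtoC Ci px py pz] in E. lra. }
  subst. nra.
Qed.

Ltac cd_leaf ::=
  lazymatch goal with
  | |- CD (fun x => Zst (normalize (dirv ?j ?s x))) _ _ => eapply CD_Zst; [assumption|assumption]
  end.

Definition psif (k : Z) (s : pt) : C :=
  Cminus (Cmult (RtoC (IZR k)) (Czpow (Zst s) (k - 1))) (Cmult (Czpow (Zst s) k) (wbf s)).

Lemma Yfield_val m s : on_sphere s -> pz s < 1 -> Yfield m s = cscale (Czpow (Zst s) (m+1)) (Pf s).
Proof. intros; unfold Yfield; rewrite Ycirc_val; auto. Qed.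

Ltac Ytac m Hg :=
  cbv beta; eapply CD_ext_loc;
  [ eapply filter_imp; [|apply (good_loc _ _ _ Hg)]; intros ? [Hx1 [Hx2 _]];
    rewrite (Yfield_val m _ Hx1 Hx2); reflexivity
  | cbv beta delta [cv1 cv2 cv3 cscale Pf wbf omf] iota; cbn [fst snd]; cd_all ].

Lemma sdivY m s : goodk (m+1) s -> sdiv (Yfield m) s = psif (m+1) s.
Proof.
  intros Hg. pose proof Hg as [Hs [Hz Hk]]. pose proof (goodk_Zst _ _ Hg) as HZ.
  rewrite sdiv_cpd.
  erewrite (cpd_CD 0); [|Ytac m Hg; rewrite (Nd _ _ Hs); exact HZ].
  erewrite (cpd_CD 1); [|Ytac m Hg; rewrite (Nd _ _ Hs); exact HZ].
  erewrite (cpd_CD 2); [|Ytac m Hg; rewrite (Nd _ _ Hs); exact HZ].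
  cbv beta. rewrite !(Nd _ _ Hs). unfold psif, wbf.
  generalize (Czpow (Zst s) (m + 1 - 1)) as P1; generalize (Czpow (Zst s) (m + 1)) as P0.
  intros [p0 q0] [p1 q1].
  unfold Gf, Zst, Xt1, Xt2, Xt3, Cdiv, kr, crd. cbn [nrm Nat.eqb].
  destruct s as [[a b] c]; unfold on_sphere in *; cbn [px py pz fst snd] in *.
  sph_subst.
  csplit; field; dcond.
Qed.

Ltac cd_leaf ::=
  lazymatch goal with
  | |- CD (fun x => Zst (normalize (dirv ?j ?s x))) _ _ => eapply CD_Zst; [assumption|assumption]
  end.

Definition gwf (j : nat) (s : pt) : C :=
  Cminus (Cminus (RtoC (kr 0 j)) (Cmult Ci (RtoC (kr 1 j)))) (Cmult (RtoC (crd j s)) (wbf s)).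
Definition Hc (k : Z) (j : nat) (s : pt) : C :=
  Cminus (Cminus (Cmult (Cmult (RtoC (IZR k * IZR (k - 1))) (Czpow (Zst s) (k - 1 - 1))) (Gf j s))
                 (Cmult (Cmult (Cmult (RtoC (IZR k)) (Czpow (Zst s) (k - 1))) (wbf s)) (Gf j s)))
         (Cmult (Czpow (Zst s) k) (gwf j s)).

Lemma cond1 k s : goodk k s -> Zst s <> RtoC 0 \/ (0 <= k - 1)%Z \/ IZR k = 0.
Proof.
  intros Hg. destruct (goodk_Zst _ _ Hg) as [H|H]; [left; exact H|right].
  destruct (Z.eq_dec k 0) as [->|H2]; [right; reflexivity|left; lia].
Qed.
Lemma cond2 k s : goodk k s -> Zst s <> RtoC 0 \/ (0 <= k - 1 - 1)%Z \/ IZR k * IZR (k - 1) = 0.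
Proof.
  intros Hg. destruct (goodk_Zst _ _ Hg) as [H|H]; [left; exact H|right].
  destruct (Z.eq_dec k 0) as [->|H2]; [right; apply Rmult_0_l|].
  destruct (Z.eq_dec k 1) as [->|H3]; [right; apply Rmult_0_r|left; lia].
Qed.

Lemma CD_psi k j s : goodk k s ->
  CD (fun t => psif k (normalize (dirv j s t))) (crd j s) (Hc k j s).
Proof.
  intros Hg. pose proof Hg as [Hs [Hz Hk]].
  unfold psif, wbf.
  eapply CD_eqv; [cd_all|].
  - rewrite (Nd _ _ Hs). apply cond1; auto.
  - rewrite (Nd _ _ Hs). apply goodk_Zst; auto.
  - cbv beta. rewrite !(Nd _ _ Hs). unfold Hc, gwf, wbf.
    generalize (Czpow (Zst s) (k - 1 - 1)) as P2; generalize (Czpow (Zst s) (k - 1)) as P1;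
    generalize (Czpow (Zst s) k) as P0.
    intros [p0 q0] [p1 q1] [p2 q2].
    unfold Gf, Zst, Xt1, Xt2, Xt3, Cdiv.
    destruct s as [[a b] c]; unfold on_sphere in *; cbn [px py pz fst snd] in *.
    rewrite minus_IZR.
    csplit; field; lra.
Qed.

Lemma sgrad_psi m s : goodk (m+1) s ->
  sgrad (sdiv (Yfield m)) s = (Hc (m+1) 0 s, Hc (m+1) 1 s, Hc (m+1) 2 s).
Proof.
  intros Hg. rewrite sgrad_cpd. f_equal; [f_equal|]; apply cpd_CD; cbv beta;
  (eapply CD_ext_loc;
   [ eapply filter_imp; [|apply (good_loc _ _ _ Hg)]; intros ? Hx;
     rewrite (sdivY m _ Hx); reflexivity
   | apply CD_psi; exact Hg ]).
Qed.

Lemma good_of m p : on_sphere p -> p <> north_pole -> ((m + 1 < 0)%Z -> p <> south_pole) -> goodk (m+1) p.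
Proof.
  destruct p as [[a b] c]; unfold on_sphere, north_pole, south_pole; cbn [px py pz fst snd].
  intros Hs Hn Hso. split; [exact Hs|split].
  - destruct (Rlt_dec c 1) as [H|H]; [exact H|exfalso].
    assert (c = 1) by nra. assert (a = 0) by nra. assert (b = 0) by nra. subst. apply Hn; reflexivity.
  - intros Hk. specialize (Hso Hk).
    destruct (Rlt_dec (-1) c) as [H|H]; [exact H|exfalso].
    assert (c = -1) by nra. assert (a = 0) by nra. assert (b = 0) by nra. subst. apply Hso; reflexivity.
Qed.

Ltac side_tac Hs Hg :=
  rewrite (Nd _ _ Hs);
  first [ apply cond2; exact Hg | apply cond1; exact Hg | apply goodk_Zst; exact Hg
        | let E := fresh in intro E; apply (f_equal fst) in E; csimpl; destruct Hg as [_ [? _]]; lra ].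

Ltac Htac m Hg Hs :=
  cbv beta; eapply CD_ext_loc;
  [ eapply filter_imp; [|apply (good_loc _ _ _ Hg)]; intros ? Hx;
    rewrite (sgrad_psi m _ Hx); reflexivity
  | cbv beta delta [cv1 cv2 cv3 Hc Gf gwf wbf] iota; cbn [fst snd]; cd_all; side_tac Hs Hg ].

Theorem mainTheorem18 (m : Z) (p : pt) :
  on_sphere p -> p <> north_pole ->
  ((m + 1 < 0)%Z -> p <> south_pole) ->
  Cplus (slap (sdiv (Yfield m)) p) (Cmult (RtoC 2) (sdiv (Yfield m) p)) = RtoC 0.
Proof.
  intros Hs Hn Hso. pose proof (good_of m p Hs Hn Hso) as Hg.
  pose proof Hg as [_ [Hz _]].
  unfold slap. rewrite sdiv_cpd.
  erewrite (cpd_CD 0); [|Htac m Hg Hs].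
  erewrite (cpd_CD 1); [|Htac m Hg Hs].
  erewrite (cpd_CD 2); [|Htac m Hg Hs].
  rewrite (sdivY m p Hg).
  cbv beta. rewrite !(Nd _ _ Hs). unfold psif, wbf.
  generalize (Czpow (Zst p) (m + 1 - 1 - 1 - 1)) as P3;
  generalize (Czpow (Zst p) (m + 1 - 1 - 1)) as P2; generalize (Czpow (Zst p) (m + 1 - 1)) as P1;
  generalize (Czpow (Zst p) (m + 1)) as P0.
  intros [p0 q0] [p1 q1] [p2 q2] [p3 q3].
  unfold Gf, Zst, Xt1, Xt2, Xt3, Cdiv, kr, crd. cbn [nrm Nat.eqb].
  destruct p as [[a b] c]; unfold on_sphere in *; cbn [px py pz fst snd] in *.
  rewrite !minus_IZR.
  sph_subst.
  csplit; field; dcond.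
Qed.
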